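(* In the standard LLP setup, fix $N\ge1$. If the optimistic LLP supervisor is valid, i.e. $L(G,\gamma^N_{optm})=\overline{K^\uparrow}$, then there is no run-time error in $L(G,\gamma^N_{optm})$, i.e. there is no $s\in L(G,\gamma^N_{optm})$ with $f^N_{optm}(s)=\emptyset$.
   Context: Standard LLP setup. $\Sigma=\Sigma_c\,\dot\cup\,\Sigma_{uc}$ is a finite alphabet partitioned into controllable and uncontrollable events. The plant $G$ has generated language $L(G)$ and marked language $L_m(G)$ with $L(G)=\overline{L_m(G)}$ ($\overline{M}$ = set of prefixes of strings in $M$). The legal language $K\subseteq L_m(G)$ satisfies $K=\overline{K}\cap L_m(G)$. For a prefix-closed $L$, $M$ is controllable w.r.t. $L$ if $\overline{M}\Sigma_{uc}\cap L\subseteq\overline{M}$; $K^\uparrow$ is the supremal sublanguage of $K$ controllable w.r.t. $L(G)$. For a language $L$ and $s\in\Sigma^*$: $L/s=\{t: st\in L\}$; $L|_N=\{t\in L:|t|\le N\}$; $\Sigma_{L(G)}(s)=\{\sigma\in\Sigma: s\sigma\in L(G)\}$. $M^{\uparrow/s|_N}$ is the supremal sublanguage of $M$ controllable w.r.t. $L(G)/s|_N$. Optimistic attitude: $f^N_{optm}(s)=[K/s|_N\cup(\overline{K}/s|_N\setminus\overline{K}/s|_{N-1})]^{\uparrow/s|_N}$; control policy $\gamma^N_{optm}(s)=(\overline{f^N_{optm}(s)}\cap\Sigma)\cup(\Sigma_{uc}\cap\Sigma_{L(G)}(s))$. Closed-loop language $L(G,\gamma)$: $\epsilon\in L(G,\gamma)$,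 and $s\sigma\in L(G,\gamma)$ iff $s\in L(G,\gamma)$, $s\sigma\in L(G)$, $\sigma\in\gamma(s)$. A supervisor with policy $\gamma^N$ is valid if $L(G,\gamma^N)=\overline{K^\uparrow}$. A run-time error occurs at $s$ if $s\in L(G,\gamma^N)$ and $f^N(s)=\emptyset$. *)

(* Defs.v *)
From mathcomp Require Import all_boot.
Set Implicit Arguments. Unset Strict Implicit. Unset Printing Implicit Defensive.

Definition lang (Sigma : finType) := seq Sigma -> Prop.

Section LLP.
Variable Sigma : finType.

Definition pre (M : lang Sigma) : lang Sigma := fun t => exists u, M (t ++ u).
Definition quot (L : lang Sigma) (s : seq Sigma) : lang Sigma := fun t => L (s ++ t).
Definition trunc (L : lang Sigma) (N : nat) : lang Sigma := fun t => L t /\ size t <= N.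
Definition lunion (A B : lang Sigma) : lang Sigma := fun t => A t \/ B t.
Definition ldiff (A B : lang Sigma) : lang Sigma := fun t => A t /\ ~ B t.
Definition lsub (A B : lang Sigma) := forall t, A t -> B t.

(* uc : the uncontrollable events (Sigma_uc); Sigma_c is its complement. *)
Definition controllable (uc : pred Sigma) (M L : lang Sigma) :=
  forall s sigma, pre M s -> uc sigma -> L (rcons s sigma) -> pre M (rcons s sigma).

Definition supC (uc : pred Sigma) (M L : lang Sigma) : lang Sigma :=
  fun t => exists M', lsub M' M /\ controllable uc M' L /\ M' t.

Definition f_optm (uc : pred Sigma) (Lm K : lang Sigma) (N : nat) (s : seq Sigma)
  : lang Sigma :=
  supC uc
    (lunion (trunc (quot K s) N)
            (ldiff (trunc (quot (pre K) s) N) (trunc (quot (pre K) s) N.-1)))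
    (trunc (quot (pre Lm) s) N).

Definition gamma_optm (uc : pred Sigma) (Lm K : lang Sigma) (N : nat)
  (s : seq Sigma) (sigma : Sigma) : Prop :=
  pre (f_optm uc Lm K N s) [:: sigma] \/ (uc sigma /\ pre Lm (rcons s sigma)).

(* closed-loop language L(G, gamma), with L(G) = pre Lm *)
Inductive closed_loop (Lm : lang Sigma) (gamma : seq Sigma -> Sigma -> Prop)
  : seq Sigma -> Prop :=
| cl_nil : closed_loop Lm gamma [::]
| cl_step : forall s sigma, closed_loop Lm gamma s -> pre Lm (rcons s sigma) ->
    gamma s sigma -> closed_loop Lm gamma (rcons s sigma).

End LLP.

(* Main.v *)
Require Import Defs.
From mathcomp Require Import all_boot.
From mathcomp Require Import zify.

Lemma pre_cat (Sigma : finType) (M : lang Sigma) a b : pre M (a ++ b) -> pre M a.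
Proof. by case=> u Hu; exists (b ++ u); rewrite catA. Qed.

Definition Mpp (Sigma : finType) (M : lang Sigma) (N : nat) (s : seq Sigma) : lang Sigma :=
  fun t => size t <= N /\ pre M (s ++ t) /\ (size t = N \/ M (s ++ t)).

Lemma Mpp_pre (Sigma : finType) (M : lang Sigma) N s t :
  size t <= N -> pre M (s ++ t) -> pre (@Mpp Sigma M N s) t.
Proof.
move=> Hs [w Hw].
case: (leqP (size (t ++ w)) N) => Hsz.
  exists w; rewrite /Mpp; split => //; split.
    by rewrite /pre; exists [::]; rewrite cats0 catA.
  by right; rewrite catA.
exists (take (N - size t) w).
have Hsz2 : size (t ++ take (N - size t) w) = N.
  rewrite size_cat size_take; rewrite size_cat in Hsz.
  case: ifP => H; lia.
rewrite /Mpp; split; first by rewrite Hsz2.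
split; last by left.
rewrite /pre; exists (drop (N - size t) w); by rewrite -!catA cat_take_drop catA.
Qed.

Lemma Mpp_pre_inv (Sigma : finType) (M : lang Sigma) N s t :
  pre (@Mpp Sigma M N s) t -> size t <= N /\ pre M (s ++ t).
Proof.
case=> u; rewrite /Mpp => -[H1 [H2 _]]; split.
  by rewrite size_cat in H1; lia.
by rewrite catA in H2; apply: pre_cat H2.
Qed.

Theorem theorem3 (Sigma : finType) (uc : pred Sigma) (Lm K : lang Sigma) (N : nat) :
  1 <= N ->
  lsub K Lm ->
  (forall t, K t <-> (pre K t /\ Lm t)) ->
  (forall s, closed_loop Lm (gamma_optm uc Lm K N) s <-> pre (supC uc K (pre Lm)) s) ->
  ~ (exists s, closed_loop Lm (gamma_optm uc Lm K N) s /\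
               (forall t, ~ f_optm uc Lm K N s t)).
Proof.
move=> HN _ _ Hcl [s [Hs Hf]].
have [u [M [HMK [HMc HMu]]]] := (proj1 (Hcl s) Hs).
have HpM : pre M s by exists u.
have [t Ht] : pre (@Mpp Sigma M N s) [::].
  by apply: Mpp_pre => //; rewrite cats0.
apply: (Hf t); exists (@Mpp Sigma M N s); split; [|split].
- rewrite /Mpp => v [Hv1 [Hv2 [Hv3|Hv3]]].
    right; split.
      split => //; case: Hv2 => w Hw; exists w; exact: HMK.
    move=> [_ H]; lia.
  by left; split => //; apply: HMK.
- move=> v sigma Hv Huc [HL Hsz].
  have [Hv1 Hv2] := @Mpp_pre_inv _ _ _ _ _ Hv.
  apply: Mpp_pre => //.
  rewrite -rcons_cat; apply: HMc => //.
  by rewrite rcons_cat.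
- exact: Ht.
Qed.
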